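(* Consider the two-sided market model described in the context, and suppose the ISP charges no membership fee to consumers ($c=0$), so that every consumer participates ($x_t=x_0$), and chooses only the CP fee $b$ to maximize its revenue. Then the revenue-maximizing CP fee is $$ b_{opt}=\begin{cases} a, & \text{if } a> \frac{\lambda}{2}\frac{x_0^{2-\gamma}}{\gamma-2},\\[4pt] \frac{\lambda}{\gamma-2}x_0^{2-\gamma}-a, & \text{if } 0\leq a \leq \frac{\lambda}{2}\frac{x_0^{2-\gamma}}{\gamma-2}.\end{cases} $$
   Context: Model (a monopolist ISP between consumers and content providers (CPs)). Fix exponents $\gamma>2$, $\beta>2$. Consumer types $x$ have density $x^{-\gamma}$ on $x\ge x_0:=(\frac{1}{\gamma-1})^{\frac{1}{\gamma-1}}$; CP types $y$ have density $y^{-\beta}$ on $y\ge y_0:=(\frac{1}{\beta-1})^{\frac{1}{\beta-1}}$. Write $X(s)=\int_s^\infty x^{1-\gamma}dx$, $Y(s)=\int_s^\infty y^{1-\beta}dy$, $\bar X=X(x_0)=\frac{x_0^{2-\gamma}}{\gamma-2}$, $\bar Y=Y(y_0)=\frac{y_0^{2-\beta}}{\beta-2}$, $T_0=\bar X\bar Y$. If consumers of types $\ge x_t$ and CPs of types $\ge y_t$ participate ($x_t\ge x_0$, $y_t\ge y_0$), total traffic is $T=\sqrt{T_0X(x_t)Y(y_t)}$ and network speed is $T_0/T$. A participating consumer of type $x$ gets utility $\phi\big(\int_{y_t}^\infty \frac{T_0}{T}x y^{1-\beta}dy\big)-c$, where $\phi$ is a nonnegative concave function and $c\ge 0$ is the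 membership fee; a participating CP of type $y$ gets utility $\lambda\int_{x_t}^\infty\frac{T_0}{T}x^{1-\gamma}y\,dx-by-ay$, where $\lambda>0$ is an exchange rate, $a\ge 0$ is the CP cost parameter and $b$ the CP fee. The ISP's revenue is $\mathcal R=c\int_{x_t}^\infty x^{-\gamma}dx+b\,Y(y_t)$. The ISP selects thresholds and charges the prices at which the threshold types are exactly indifferent (utility $0$); here with $c=0$ this means $x_t=x_0$ and $b=\lambda\int_{x_0}^\infty\frac{T_0}{T}x^{1-\gamma}dx-a$, and the optimal $b$ is the one corresponding to the revenue-maximizing $y_t\ge y_0$. *)

(* Defs.v *)
From Stdlib Require Import Reals.
From Coquelicot Require Import Coquelicot.
Open Scope R_scope.

Definition Int_from (f : R -> R) (s : R) : R :=
  RInt_gen f (at_point s) (Rbar_locally p_infty).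

(* lower ends of the type supports *)
Definition x0 (gam : R) : R := Rpower (1 / (gam - 1)) (1 / (gam - 1)).
Definition y0 (bet : R) : R := Rpower (1 / (bet - 1)) (1 / (bet - 1)).

Definition Xf (gam s : R) : R := Int_from (fun x => Rpower x (1 - gam)) s.
Definition Yf (bet s : R) : R := Int_from (fun y => Rpower y (1 - bet)) s.

Definition Xbar (gam : R) : R := Xf gam (x0 gam).
Definition Ybar (bet : R) : R := Yf bet (y0 bet).
Definition T0 (gam bet : R) : R := Xbar gam * Ybar bet.

Definition traffic (gam bet xt yt : R) : R :=
  sqrt (T0 gam bet * Xf gam xt * Yf bet yt).
Definition speed (gam bet xt yt : R) : R := T0 gam bet / traffic gam bet xt yt.

Definition cp_utility (gam bet lam a b xt yt y : R) : R :=
  lam * Int_from (fun x => speed gam bet xt yt * Rpower x (1 - gam) * y) xt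
  - b * y - a * y.

(* CP fee making the threshold CP type indifferent, when c = 0 and xt = x0:
   b = lam * int_{x0}^oo (T0/T) x^(1-gamma) dx - a *)
Definition cp_fee (gam bet lam a yt : R) : R :=
  lam * Int_from (fun x => speed gam bet (x0 gam) yt * Rpower x (1 - gam)) (x0 gam)
  - a.

Definition revenue (gam bet c b xt yt : R) : R :=
  c * Int_from (fun x => Rpower x (- gam)) xt + b * Yf bet yt.

Definition revenue0 (gam bet lam a yt : R) : R :=
  revenue gam bet 0 (cp_fee gam bet lam a yt) (x0 gam) yt.

(* Main.v *)
Require Import Defs.
From Stdlib Require Import Reals Lra.
From Coquelicot Require Import Coquelicot.
Open Scope R_scope.

Lemma Rpower_pos' x e : 0 < Rpower x e.
Proof. unfold Rpower; apply exp_pos. Qed.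

Lemma lim_pow_inf e : e < 0 ->
  filterlim (fun x => Rpower x e) (Rbar_locally p_infty) (locally 0).
Proof.
  intros He.
  assert (H : is_lim (fun x => exp (e * ln x)) p_infty 0).
  { apply (is_lim_comp exp (fun x => e * ln x) p_infty 0 m_infty).
    - apply is_lim_exp_m.
    - assert (H1 := is_lim_scal_l ln e p_infty p_infty is_lim_ln_p).
      simpl in H1. unfold is_Rbar_mult, Rbar_mult' in H1.
      destruct (Rle_dec 0 e); [lra|]. simpl in H1.
      exact H1.
    - exists 0. intros x _ Hx. discriminate. }
  exact H.
Qed.

Definition Fk k x := - Rpower x (2 - k) / (k - 2).

Lemma Fk_der k x : 2 < k -> 0 < x -> is_derive (Fk k) x (Rpower x (1 - k)).
Proof.
  intros Hk Hx.
  apply is_derive_Reals.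
  unfold Fk.
  assert (H := derivable_pt_lim_power x (2 - k) Hx).
  replace (2 - k - 1) with (1 - k) in H by ring.
  replace (Rpower x (1 - k)) with (- ((2 - k) * Rpower x (1 - k)) / (k - 2)) by (field; lra).
  unfold Rdiv.
  apply (derivable_pt_lim_scal_right (fun y => - Rpower y (2-k)) x _ (/ (k-2))).
  apply derivable_pt_lim_opp. exact H.
Qed.

Lemma prod_ev (s : R) (P : R * R -> Prop) :
  (forall b, s < b -> P (s, b)) ->
  filter_prod (at_point s) (Rbar_locally p_infty) P.
Proof.
  intros H.
  apply (Filter_prod _ _ _ (fun x => x = s) (fun y => s < y)).
  - reflexivity.
  - exists s. intros; lra.
  - intros x y -> Hy. apply H; exact Hy.
Qed.

Lemma IntP k s : 2 < k -> 0 < s ->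
  is_RInt_gen (fun x => Rpower x (1 - k)) (at_point s) (Rbar_locally p_infty)
    (Rpower s (2 - k) / (k - 2)).
Proof.
  intros Hk Hs.
  apply (is_RInt_gen_ext (Derive (Fk k))).
  { apply prod_ev. intros b Hb x Hx. simpl in Hx.
    rewrite Rmin_left in Hx by lra. 
    apply is_derive_unique, Fk_der; lra. }
  replace (Rpower s (2 - k) / (k - 2)) with (0 - Fk k s) by (unfold Fk; field; lra).
  apply is_RInt_gen_Derive.
  - apply prod_ev. intros b Hb x Hx. simpl in Hx.
    rewrite Rmin_left in Hx by lra.
    eexists; apply Fk_der; lra.
  - apply prod_ev. intros b Hb x Hx. simpl in Hx.
    rewrite Rmin_left in Hx by lra.
    apply (continuous_ext_loc _ (fun y => Rpower y (1 - k))).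
    + assert (Hx0 : 0 < x) by lra.
      exists (mkposreal x Hx0). intros y Hy.
      apply sym_eq, is_derive_unique, Fk_der; try lra.
      unfold ball in Hy; simpl in Hy; unfold AbsRing_ball, abs, minus, plus, opp in Hy; simpl in Hy.
      apply Rabs_lt_between in Hy. lra.
    + apply continuity_pt_filterlim, derivable_continuous_pt.
      eexists. apply derivable_pt_lim_power; lra.
  - intros P HP. unfold filtermap, at_point. apply locally_singleton. exact HP.
  - unfold Fk.
    apply (filterlim_comp _ _ _ (fun x => Rpower x (2 - k)) (fun r => - r / (k - 2)) _ (locally 0)).
    + apply lim_pow_inf; lra.
 + assert (H := proj1 (continuity_pt_filterlim (fun r => - r/(k-2)) 0) ltac:(unfold Rdiv; reg)).
      cbv beta in H. replace (- 0 / (k-2)) with 0 in H by (field; lra). exact H.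
Qed.

Lemma Int_pow k s : 2 < k -> 0 < s ->
  Int_from (fun x => Rpower x (1 - k)) s = Rpower s (2 - k) / (k - 2).
Proof.
  intros Hk Hs. unfold Int_from. apply is_RInt_gen_unique. apply IntP; auto.
Qed.

Lemma Int_cpow c k s : 2 < k -> 0 < s ->
  Int_from (fun x => c * Rpower x (1 - k)) s = c * (Rpower s (2 - k) / (k - 2)).
Proof.
  intros Hk Hs. unfold Int_from. apply is_RInt_gen_unique.
  apply (is_RInt_gen_scal (fun x => Rpower x (1 - k)) c). apply IntP; auto.
Qed.

Lemma x0_pos g : 0 < x0 g.
Proof. apply Rpower_pos'. Qed.
Lemma y0_pos g : 0 < y0 g.
Proof. apply Rpower_pos'. Qed.

Definition Yv b y := Rpower y (2 - b) / (b - 2).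
Definition XB g := Rpower (x0 g) (2 - g) / (g - 2).

Lemma Yv_pos b y : 2 < b -> 0 < Yv b y.
Proof. intros; unfold Yv; apply Rdiv_lt_0_compat; [apply Rpower_pos'|lra]. Qed.
Lemma XB_pos g : 2 < g -> 0 < XB g.
Proof. intros; unfold XB; apply Rdiv_lt_0_compat; [apply Rpower_pos'|lra]. Qed.

Lemma fee_formula g b lam a y : 2 < g -> 2 < b -> 0 < y ->
  cp_fee g b lam a y = lam * XB g * sqrt (Yv b (y0 b)) / sqrt (Yv b y) - a.
Proof.
  intros Hg Hb Hy. unfold cp_fee.
  rewrite Int_cpow; [|lra|apply x0_pos].
  unfold speed, traffic, T0, Xbar, Ybar, Xf, Yf.
  rewrite !Int_pow; try lra; try apply x0_pos; try apply y0_pos; auto.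
  fold (Yv b y) (Yv b (y0 b)) (XB g).
  assert (H1 := XB_pos g Hg). assert (H2 := Yv_pos b y Hb). assert (H3 := Yv_pos b (y0 b) Hb).
  replace (XB g * Yv b (y0 b) * XB g * Yv b y) with ((XB g * XB g) * (Yv b (y0 b) * Yv b y)) by ring.
  rewrite sqrt_mult_alt by nra. rewrite sqrt_square by lra.
  rewrite sqrt_mult_alt by lra.
  assert (0 < sqrt (Yv b y)) by (apply sqrt_lt_R0; lra).
  assert (0 < sqrt (Yv b (y0 b))) by (apply sqrt_lt_R0; lra).
  assert (E : Yv b (y0 b) = sqrt (Yv b (y0 b)) * sqrt (Yv b (y0 b))) by (rewrite sqrt_sqrt; lra).
  rewrite E at 1. field. repeat split; lra.
Qed.

Lemma rev_formula g b lam a y : 2 < g -> 2 < b -> 0 < y ->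
  revenue0 g b lam a y = cp_fee g b lam a y * Yv b y.
Proof.
  intros. unfold revenue0, revenue, Yf. rewrite Int_pow; auto. fold (Yv b y). ring.
Qed.

Lemma Rpower_anti y1 y2 e : e < 0 -> 0 < y1 -> y1 < y2 -> Rpower y2 e < Rpower y1 e.
Proof.
  intros He H1 H2. unfold Rpower. apply exp_increasing.
  assert (ln y1 < ln y2) by (apply ln_increasing; lra). nra.
Qed.

Lemma Yv_le b y : 2 < b -> 0 < y -> y0 b <= y -> Yv b y <= Yv b (y0 b).
Proof.
  intros Hb Hy H. unfold Yv. destruct (Req_dec y (y0 b)) as [->|Hn]; [lra|].
  apply Rmult_le_compat_r. apply Rlt_le, Rinv_0_lt_compat; lra.
  left; apply Rpower_anti; try lra. apply y0_pos.
Qed.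

Lemma Yv_ge b y : 2 < b -> 0 < y -> Yv b y <= Yv b (y0 b) -> y0 b <= y.
Proof.
  intros Hb Hy H. destruct (Rle_or_lt (y0 b) y) as [|Hl]; auto.
  exfalso. unfold Yv in H.
  assert (Rpower (y0 b) (2 - b) < Rpower y (2 - b)) by (apply Rpower_anti; lra).
  assert (/ (b-2) > 0) by (apply Rinv_0_lt_compat; lra).
  unfold Rdiv in H. nra.
Qed.

Lemma Yv_inv b v : 2 < b -> 0 < v -> exists y, 0 < y /\ Yv b y = v.
Proof.
  intros Hb Hv. exists (Rpower ((b-2) * v) (1 / (2 - b))). split. apply Rpower_pos'.
  unfold Yv. rewrite Rpower_mult.
  replace (1 / (2 - b) * (2 - b)) with 1 by (field; lra).
  rewrite Rpower_1 by nra. field; lra.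
Qed.

Lemma reduce g b lam a y : 2 < g -> 2 < b -> y0 b <= y ->
  let U := sqrt (Yv b (y0 b)) in let C := lam * XB g * U in
  let u := sqrt (Yv b y) in
  0 < u /\ u <= U /\ revenue0 g b lam a y = C * u - a * u * u /\ cp_fee g b lam a y = C / u - a.
Proof.
  intros Hg Hb Hy U C u.
  assert (Hy0 := y0_pos b).
  assert (Hyp : 0 < y) by lra.
  assert (Hu : 0 < u) by (apply sqrt_lt_R0, Yv_pos; auto).
  split; auto. split.
  { apply sqrt_le_1_alt. apply Yv_le; auto. }
  rewrite rev_formula, fee_formula; auto. fold U u. split; [|reflexivity].
  assert (E : Yv b y = u * u) by (unfold u; rewrite sqrt_sqrt; [auto| apply Rlt_le, Yv_pos; auto]).
  rewrite E. unfold C. field. lra.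
Qed.

Theorem theorem1 (gam bet lam a : R) :
  2 < gam -> 2 < bet -> 0 < lam -> 0 <= a ->
  (exists yt, y0 bet <= yt /\
     forall y, y0 bet <= y -> revenue0 gam bet lam a y <= revenue0 gam bet lam a yt) /\
  (forall yt, y0 bet <= yt ->
     (forall y, y0 bet <= y -> revenue0 gam bet lam a y <= revenue0 gam bet lam a yt) ->
     (lam / 2 * (Rpower (x0 gam) (2 - gam) / (gam - 2)) < a ->
        cp_fee gam bet lam a yt = a) /\
     (a <= lam / 2 * (Rpower (x0 gam) (2 - gam) / (gam - 2)) ->
        cp_fee gam bet lam a yt = lam / (gam - 2) * Rpower (x0 gam) (2 - gam) - a)).
Proof.
  intros Hg Hb Hl Ha.
  fold (XB gam).
  replace (lam / (gam - 2) * Rpower (x0 gam) (2 - gam)) with (lam * XB gam) by (unfold XB; field; lra).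
  assert (HX := XB_pos gam Hg).
  set (U := sqrt (Yv bet (y0 bet))).
  assert (HU : 0 < U) by (apply sqrt_lt_R0, Yv_pos; auto).
  set (C := lam * XB gam * U).
  assert (HC : 0 < C) by (unfold C; apply Rmult_lt_0_compat; [apply Rmult_lt_0_compat|]; auto).
  assert (Hyy : y0 bet <= y0 bet) by lra.
  destruct (reduce gam bet lam a (y0 bet) Hg Hb Hyy) as (_ & _ & R0 & F0).
  fold U C in R0, F0.
  assert (Hstar : 2 * a * U > C -> exists ys, y0 bet <= ys /\ sqrt (Yv bet ys) = C / (2 * a)).
  { intros Hlt. assert (Hap : 0 < a) by nra.
    assert (Hv : 0 < C / (2 * a)) by (apply Rdiv_lt_0_compat; lra).
    destruct (Yv_inv bet (C / (2 * a) * (C / (2 * a))) Hb) as (ys & Hys & E). nra.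
    exists ys. split.
    - apply Yv_ge; auto. rewrite E.
      assert (Hlt2 : C / (2 * a) < U) by (apply Rmult_lt_reg_r with (2 * a); [lra|]; field_simplify; lra).
      assert (EU : Yv bet (y0 bet) = U * U) by (unfold U; rewrite sqrt_sqrt; [auto|apply Rlt_le, Yv_pos; auto]).
      rewrite EU. nra.
    - rewrite E. apply sqrt_square. lra. }
  assert (Hcase : a <= lam / 2 * XB gam <-> 2 * a * U <= C).
  { unfold C. split; intros; nra. }
  split.
  - destruct (Rle_or_lt (2 * a * U) C) as [Hle|Hlt].
    + exists (y0 bet). split; [lra|]. intros y Hy.
      destruct (reduce gam bet lam a y Hg Hb Hy) as (Hu & HuU & R1 & _). fold U C in R1, HuU.
      rewrite R0, R1. set (u := sqrt (Yv bet y)) in *.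
      assert (0 <= a * (U - u)) by (apply Rmult_le_pos; lra).
      assert (0 <= (U - u) * (C - a * (U + u))) by (apply Rmult_le_pos; lra).
      nra.
    + destruct (Hstar Hlt) as (ys & Hys & Eu).
      exists ys. split; auto. intros y Hy.
      destruct (reduce gam bet lam a y Hg Hb Hy) as (Hu & HuU & R1 & _).
      destruct (reduce gam bet lam a ys Hg Hb Hys) as (_ & _ & R2 & _).
      fold U C in R1, R2, HuU. rewrite R1, R2, Eu.
      set (u := sqrt (Yv bet y)) in *.
      assert (Hap : 0 < a) by nra.
      set (w := C / (2 * a)) in *.
      assert (EC : C = 2 * a * w) by (unfold w; field; lra).
      rewrite EC.
      assert (0 <= a * ((u - w) * (u - w))) by (apply Rmult_le_pos; [lra| apply Rle_0_sqr]).
      assert (E2 : 2 * a * w * w - a * w * w - (2 * a * w * u - a * u * u) = a * ((u - w) * (u - w))) by ring.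
      lra.
  - intros yt Hyt Hmax.
    destruct (reduce gam bet lam a yt Hg Hb Hyt) as (Hu & HuU & R1 & F1).
    fold U C in R1, F1, HuU. rewrite F1. set (u := sqrt (Yv bet yt)) in *.
    split.
    + intros Hlt. assert (Hlt' : 2 * a * U > C) by (unfold C; nra).
      assert (Hap : 0 < a) by nra.
      destruct (Hstar Hlt') as (ys & Hys & Eu).
      destruct (reduce gam bet lam a ys Hg Hb Hys) as (_ & _ & R2 & _).
      fold U C in R2. rewrite Eu in R2.
      assert (Hm := Hmax ys Hys). rewrite R1, R2 in Hm.
      set (w := C / (2 * a)) in *.
      assert (EC : C = 2 * a * w) by (unfold w; field; lra).
      rewrite EC in Hm.
      assert (Hsq : a * ((u - w) * (u - w)) <= 0) by nra.
      assert ((u - w) * (u - w) <= 0).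
      { apply Rmult_le_reg_l with a; auto. lra. }
      assert (u = w) by nra. rewrite H0, EC. field. lra.
    + intros Hle. apply Hcase in Hle.
      assert (Hm := Hmax (y0 bet) Hyy). rewrite R0, R1 in Hm.
      destruct (Rle_lt_or_eq_dec u U HuU) as [Hlt|Heq].
      * exfalso.
        assert (0 < (U - u) * (C - a * (U + u))).
        { apply Rmult_lt_0_compat. lra.
          destruct (Rle_lt_or_eq_dec 0 a Ha) as [Hap|Ha0]; [nra|subst a; lra]. }
        nra.
      * rewrite Heq. unfold C. field. lra.
Qed.
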